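(* Let $P$ be a fixed tree poset with $|P|$ elements. For every $\delta>0$ and positive integers $\ell,q$ there exists $\gamma=\gamma(\delta,\ell,q)>0$ such that the following holds for all $i,s\in[q]$ with $i\neq s$. Let $\mathcal{M}$ be an $\ell$-gapped family of $q$-marked chains with markers from $\widetilde{\mathcal{B}}_n$ and let $F\in\mathcal{L}^i(\mathcal{M})$. Suppose $F$ is $(i,s,\gamma)$-bad with respect to $\mathcal{M}$ and $n$ is sufficiently large. If $i<s$, then $F$ is $(i,\delta)$-lower bad with respect to $\mathcal{M}$; if $i>s$, then $F$ is $(i,\delta)$-upper bad with respect to $\mathcal{M}$.
   Context: $\widetilde{\mathcal{B}}_n=\{F\subseteq[n]: |\,|F|-n/2\,|<2\sqrt{n\ln n}\}$. Full chains, $q$-chains $(F_1\supsetneq\cdots\supsetneq F_q)$ with $i$-th member $F_i$, and $q$-marked chains $(\chi,Q)$ ($\chi$ a full chain $\emptyset\subsetneq\cdots\subsetneq[n]$ containing all members of the $q$-chain $Q$) are as usual. For a family $\mathcal{M}$ of $q$-marked chains, $\mathcal{L}^i(\mathcal{M})$ is the set of sets that are the $i$-th member of some $Q$ with $(\chi,Q)\in\mathcal{M}$, and $\mathcal{M}(F,i)$ is the set of $(\chi,Q)\in\mathcal{M}$ with $F$ the $i$-th member of $Q$. A family $\mathcal{F}$ is $\ell$-gapped if $|G\setminus F|\geq\ell$ whenever $F,G\in\mathcal{F}$, $F\subsetneq G$; $\mathcal{M}$ is $\ell$-gapped if the family of all members of its $q$-chains is. For $F\subseteq[n]$: $U(F)=\{S: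 S\supseteq F\}$, $D(F)=\{S:S\subseteq F\}$; for a family $\mathcal{S}$, $\mathrm{Comp}(\mathcal{S})$ is the set of subsets of $[n]$ comparable (by inclusion) to some member of $\mathcal{S}$; $D^*(F,\mathcal{S})=(D(F)\setminus\{F\})\cap\mathrm{Comp}(\mathcal{S})\cap\widetilde{\mathcal{B}}_n$ and $U^*(F,\mathcal{S})=(U(F)\setminus\{F\})\cap\mathrm{Comp}(\mathcal{S})\cap\widetilde{\mathcal{B}}_n$. For $i<s$, $F\in\mathcal{L}^i(\mathcal{M})$ is $(i,s,\gamma)$-bad w.r.t. $\mathcal{M}$ if there are $\mathcal{W}_1,\mathcal{W}_2\subseteq\widetilde{\mathcal{B}}_n$ with $\mathcal{W}_1\cap U(F)=\emptyset$, $|\mathcal{W}_1|\le|P|$, $|\mathcal{W}_2|\le\gamma n^{\ell(s-i)}$, and for every $(\chi,Q)\in\mathcal{M}(F,i)$ either $Q\cap D^*(F,\mathcal{W}_1)\neq\emptyset$ or the $s$-th member of $Q$ lies in $\mathcal{W}_2$. For $i>s$ it is defined analogously with $\mathcal{W}_1\cap D(F)=\emptyset$, $|\mathcal{W}_2|\le\gamma n^{\ell(i-s)}$, and $U^*(F,\mathcal{W}_1)$ in place of $D^*(F,\mathcal{W}_1)$. With $\chi_0$ a uniformly random full chain: $F$ is $(i,\delta)$-lower bad w.r.t. $\mathcal{M}$ if $\mathcal{M}(F,i)\neq\emptyset$ and some $\mathcal{W}$ satisfies (a) $D\subseteq F$ for all $D\in\mathcal{W}$, (b) $Q\cap\mathcal{W}\neq\emptyset$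 for every $(\chi,Q)\in\mathcal{M}(F,i)$, (c) $\Pr[\chi_0\cap\mathcal{W}\neq\emptyset\mid F\in\chi_0]\le\delta$; $(i,\delta)$-upper bad is the same with $D\supseteq F$ in (a). *)

(* Defs.v *)
From Stdlib Require Import Reals.
From mathcomp Require Import all_boot all_order perm.

Set Implicit Arguments.
Unset Strict Implicit.
Unset Printing Implicit Defensive.

Section TreePoset.
Context {d : Order.disp_t} {P : finPOrderType d}.

Definition covers (x y : P) : bool :=
  ((x < y)%O && [forall z : P, ~~ ((x < z)%O && (z < y)%O)]).

Definition hasse_edge (x y : P) : bool := covers x y || covers y x.

Definition hasse_edge_minus (x y : P) (a b : P) : bool :=
  hasse_edge a b && ((a, b) != (x, y)) && ((a, b) != (y, x)).

(* A tree poset: nonempty, its Hasse diagram is connected and acyclic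
   (every edge is a bridge). *)
Definition tree_poset : Prop :=
  0 < #|P| /\
  (forall x y : P, connect hasse_edge x y) /\
  (forall x y : P, covers x y -> ~~ connect (hasse_edge_minus x y) x y).
End TreePoset.

Definition inBt (n : nat) (F : {set 'I_n}) : Prop :=
  Rlt (Rabs (INR #|F| - INR n / 2)) (2 * sqrt (INR n * ln (INR n))).

(* A full chain  {} = C_0 < C_1 < ... < C_n = [n]  is encoded by a
   permutation sigma of [n]:  C_k = sigma({0,...,k-1}).  This is a bijection
   between permutations and full chains, so the uniform full chain is the
   uniform permutation. *)
Definition in_chain (n : nat) (sigma : {perm 'I_n}) (F : {set 'I_n}) : bool :=
  [exists k : 'I_n.+1, F == [set sigma j | j in [pred j : 'I_n | j < k]]].

(* q-marked chain (chi, Q); members indexed 0..q-1 (paper: 1..q),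
   Q 0 is the largest member. *)
Definition mchain (n q : nat) : finType :=
  ({perm 'I_n} * {ffun 'I_q -> {set 'I_n}})%type.

Definition is_marked_chain (n q : nat) (c : mchain n q) : Prop :=
  (forall j k : 'I_q, j < k -> c.2 k \proper c.2 j) /\
  (forall j : 'I_q, in_chain c.1 (c.2 j)).

Definition marked_family_Bt (n q : nat) (M : {set mchain n q}) : Prop :=
  forall c, c \in M -> is_marked_chain c /\ (forall j, inBt (c.2 j)).

Definition Lset (n q : nat) (M : {set mchain n q}) (i : 'I_q) : {set {set 'I_n}} :=
  [set F | [exists c in M, c.2 i == F]].

Definition Msub (n q : nat) (M : {set mchain n q}) (F : {set 'I_n}) (i : 'I_q)
  : {set mchain n q} := [set c in M | c.2 i == F].

Definition gapped_family (n l : nat) (Fam : {set {set 'I_n}}) : Prop :=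
  forall F G, F \in Fam -> G \in Fam -> F \proper G -> l <= #|G :\: F|.

Definition members (n q : nat) (M : {set mchain n q}) : {set {set 'I_n}} :=
  [set F | [exists c in M, [exists j : 'I_q, c.2 j == F]]].

Definition gapped_mfamily (n q l : nat) (M : {set mchain n q}) : Prop :=
  gapped_family l (members M).

Definition Uset (n : nat) (F : {set 'I_n}) : {set {set 'I_n}} := [set S : {set 'I_n} | F \subset S].
Definition Dset (n : nat) (F : {set 'I_n}) : {set {set 'I_n}} := [set S : {set 'I_n} | S \subset F].
Definition Comp (n : nat) (S : {set {set 'I_n}}) : {set {set 'I_n}} :=
  [set X : {set 'I_n} | [exists Y in S, (X \subset Y) || (Y \subset X)]].
Definition in_Dstar (n : nat) (F : {set 'I_n}) (S : {set {set 'I_n}}) (X : {set 'I_n}) : Prop :=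
  X \in Dset F /\ X != F /\ X \in Comp S /\ inBt X.
Definition in_Ustar (n : nat) (F : {set 'I_n}) (S : {set {set 'I_n}}) (X : {set 'I_n}) : Prop :=
  X \in Uset F /\ X != F /\ X \in Comp S /\ inBt X.

Definition bad_iss (p n q l : nat) (M : {set mchain n q}) (F : {set 'I_n})
  (i s : 'I_q) (gamma : R) : Prop :=
  F \in Lset M i /\
  if i < s then
    exists W1 W2 : {set {set 'I_n}},
      (forall X, X \in W1 -> inBt X) /\ (forall X, X \in W2 -> inBt X) /\
      (forall X, X \in W1 -> X \notin Uset F) /\
      #|W1| <= p /\
      Rle (INR #|W2|) (gamma * INR n ^ (l * (s - i))) /\
      (forall c, c \in Msub M F i ->
         (exists j : 'I_q, in_Dstar F W1 (c.2 j)) \/ c.2 s \in W2)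
  else
    exists W1 W2 : {set {set 'I_n}},
      (forall X, X \in W1 -> inBt X) /\ (forall X, X \in W2 -> inBt X) /\
      (forall X, X \in W1 -> X \notin Dset F) /\
      #|W1| <= p /\
      Rle (INR #|W2|) (gamma * INR n ^ (l * (i - s))) /\
      (forall c, c \in Msub M F i ->
         (exists j : 'I_q, in_Ustar F W1 (c.2 j)) \/ c.2 s \in W2).

(* Pr[chi_0 meets W | F in chi_0] for a uniformly random full chain chi_0 *)
Definition cond_prob_meet (n : nat) (W : {set {set 'I_n}}) (F : {set 'I_n}) : R :=
  Rdiv (INR #|[set sigma : {perm 'I_n} | in_chain sigma F &&
                                   [exists D in W, in_chain sigma D]]|)
       (INR #|[set sigma : {perm 'I_n} | in_chain sigma F]|).

Definition lower_bad (n q : nat) (M : {set mchain n q}) (F : {set 'I_n})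
  (i : 'I_q) (delta : R) : Prop :=
  Msub M F i != set0 /\
  exists W : {set {set 'I_n}},
    (forall D, D \in W -> D \subset F) /\
    (forall c, c \in Msub M F i -> exists j : 'I_q, c.2 j \in W) /\
    Rle (cond_prob_meet W F) delta.

Definition upper_bad (n q : nat) (M : {set mchain n q}) (F : {set 'I_n})
  (i : 'I_q) (delta : R) : Prop :=
  Msub M F i != set0 /\
  exists W : {set {set 'I_n}},
    (forall D, D \in W -> F \subset D) /\
    (forall c, c \in Msub M F i -> exists j : 'I_q, c.2 j \in W) /\
    Rle (cond_prob_meet W F) delta.

(* Main.v *)
Require Import Defs.
From Stdlib Require Import Reals Lra Lia.
From mathcomp Require Import all_boot all_order perm zify.
Set Implicit Arguments. Unset Strict Implicit. Unset Printing Implicit Defensive.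

Definition lev n (s : {perm 'I_n}) (k : nat) : {set 'I_n} :=
  [set s j | j in [pred j : 'I_n | j < k]].

Lemma card_lt_ord n k : k <= n -> #|[pred j : 'I_n | j < k]| = k.
Proof.
move=> le.
have -> : #|[pred j : 'I_n | j < k]| = #|[set widen_ord le j | j : 'I_k]|.
  apply: eq_card => j; rewrite inE; apply/idP/imsetP.
    by move=> jk; exists (Ordinal jk) => //; apply: val_inj.
  by case=> j' _ ->; rewrite /= ltn_ord.
by rewrite card_imset ?card_ord // => x y /(congr1 val) /= /val_inj.
Qed.

Lemma card_lev n (s : {perm 'I_n}) k : k <= n -> #|lev s k| = k.
Proof. by move=> le; rewrite /lev card_imset ?card_lt_ord //; exact: perm_inj. Qed.

Lemma in_chainE n (s : {perm 'I_n}) X : in_chain s X = (lev s #|X| == X).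
Proof.
apply/existsP/idP.
  case=> k /eqP E; have h : #|X| = k by rewrite E; exact: card_lev (ltnSE (ltn_ord k)).
  by rewrite h E.
move=> /eqP E; have le : #|X| < n.+1 by rewrite ltnS; have := max_card X; rewrite card_ord.
by exists (Ordinal le); rewrite -/(lev s _) E.
Qed.

Lemma lev_mono n (s : {perm 'I_n}) a b : a <= b -> lev s a \subset lev s b.
Proof.
move=> ab; apply/subsetP=> x /imsetP[j]; rewrite inE => ja ->.
by apply: imset_f; rewrite inE (leq_trans ja ab).
Qed.

Lemma card_bigcup_leq (I T : finType) (P : pred I) (A : I -> {set T}) :
  #|\bigcup_(i | P i) A i| <= \sum_(i | P i) #|A i|.
Proof.
elim/big_rec2: _ => [|i m U _ le]; first by rewrite cards0.
by rewrite (leq_trans (leq_card_setU _ _).1) ?leq_add2l.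
Qed.

Definition SF n (F : {set 'I_n}) := [set s : {perm 'I_n} | in_chain s F].
Definition SD n (F D : {set 'I_n}) := [set s : {perm 'I_n} | in_chain s F && in_chain s D].

Lemma lev_tperm n (s : {perm 'I_n}) x y k :
  lev (s * tperm x y) k = [set tperm x y z | z in lev s k].
Proof.
rewrite /lev -imset_comp; apply: eq_imset => j; by rewrite permM.
Qed.

Lemma mem_tperm_img n (x y : 'I_n) (Z : {set 'I_n}) u :
  (u \in [set tperm x y z | z in Z]) = (tperm x y u \in Z).
Proof.
apply/imsetP/idP => [[z zZ ->]|h]; first by rewrite tpermK.
by exists (tperm x y u); rewrite ?tpermK.
Qed.

Lemma swap_le n (F D : {set 'I_n}) x y :
  x \in D -> y \in F -> y \notin D -> D \subset F ->
  #|SD F D| <= #|SD F (y |: (D :\ x))|.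
Proof.
move=> xD yF yD sDF.
have xF : x \in F by exact: (subsetP sDF).
have xy : x != y by apply: contraNneq yD => <-.
have imF : [set tperm x y z | z in F] = F.
  apply/setP=> u; rewrite mem_tperm_img; case: tpermP => [->|->|/eqP ux /eqP uy] //.
  by rewrite xF yF. by rewrite xF yF.
have imD : [set tperm x y z | z in D] = y |: (D :\ x).
  apply/setP=> u; rewrite mem_tperm_img !inE; case: tpermP => [->|->|ux uy].
  - by rewrite eqxx (negbTE yD) (negbTE xy).
  - by rewrite eqxx xD.
  - by rewrite (introF eqP ux) (introF eqP uy).
have cD : #|y |: (D :\ x)| = #|D|.
  rewrite cardsU1 (cardsD1 x D) xD !inE negb_and yD orbT.
  by [].
rewrite -(card_imset _ (mulIg (tperm x y))); apply: subset_leq_card.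
apply/subsetP=> _ /imsetP[s hs ->]; move: hs; rewrite !inE !in_chainE.
case/andP=> /eqP hF /eqP hD.
by rewrite cD !lev_tperm hF hD imF imD !eqxx.
Qed.

Lemma swap_path n (F : {set 'I_n}) t : forall D D' : {set 'I_n},
  D \subset F -> D' \subset F -> #|D| = #|D'| -> #|D :\: D'| = t ->
  #|SD F D| <= #|SD F D'|.
Proof.
elim: t => [|t IH] D D' sDF sD'F eqc ht.
  have : D == D'.
    by rewrite eqEcard eqc leqnn andbT -setD_eq0 -cards_eq0 ht.
  by move/eqP->.
have /card_gt0P[x xD] : 0 < #|D :\: D'| by rewrite ht.
have h2 : #|D' :\: D| = t.+1.
  have := cardsID D' D; have := cardsID D D'; rewrite setIC; lia.
have /card_gt0P[y yD'] : 0 < #|D' :\: D| by rewrite h2.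
move: (xD) (yD'); rewrite !inE => /andP[xD' xD1] /andP[yD yD'1].
apply: (leq_trans (swap_le xD1 (subsetP sD'F _ yD'1) yD sDF)).
apply: IH => //.
- apply/subsetP=> u; rewrite !inE; case/orP=> [/eqP->|/andP[_ uD]].
    exact: (subsetP sD'F). exact: (subsetP sDF).
- rewrite cardsU1 !inE negb_and yD orbT /= -eqc (cardsD1 x D) xD1; by [].
- have -> : (y |: (D :\ x)) :\: D' = (D :\: D') :\ x.
    apply/setP=> u; rewrite !inE; case: (eqVneq u y) => [->|_].
      by rewrite yD'1 /= !andbF.
    by rewrite /=; case: (u \in D'); rewrite /= ?andbF.
  by move: ht; rewrite (cardsD1 x (D :\: D')) xD => [[]].
Qed.

Lemma count_SD n (F D : {set 'I_n}) : D \subset F ->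
  #|SD F D| * 'C(#|F|, #|D|) <= #|SF F|.
Proof.
move=> sDF; set a := #|D|.
have aF : a <= #|F| by exact: subset_leq_card.
have Fn : #|F| <= n by have := max_card F; rewrite card_ord.
have part : #|SF F| = \sum_(D' : {set 'I_n} | (D' \subset F) && (#|D'| == a)) #|SD F D'|.
  rewrite -sum1_card (partition_big (fun s => lev s a)
     (fun D' : {set 'I_n} => (D' \subset F) && (#|D'| == a))).
    apply: eq_bigr => D' /andP[_ /eqP c]; rewrite -sum1_card.
    by apply: eq_bigl => s; rewrite !inE (in_chainE s D') c.
  move=> s; rewrite inE in_chainE => /eqP hF.
  rewrite card_lev ?eqxx ?andbT ?(leq_trans aF Fn) //.
  by apply: subset_trans (lev_mono s aF) _; rewrite hF.
rewrite part mulnC -cards_draws -sum_nat_const.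
rewrite [X in _ <= X](eq_bigl (fun D' : {set 'I_n} => D' \in [set A : {set 'I_n} | A \subset F & #|A| == a])); last first.
  by move=> D'; rewrite inE.
apply: leq_sum => D'; rewrite inE => /andP[sD'F /eqP c].
by apply: (swap_path (t := #|D :\: D'|)).
Qed.

Definition EW n (F : {set 'I_n}) (W : {set {set 'I_n}}) :=
  [set s : {perm 'I_n} | in_chain s F && [exists D in W, in_chain s D]].

Lemma EW_L1 n (F : {set 'I_n}) (W : {set {set 'I_n}}) B :
  (forall D, D \in W -> D \subset F /\ B <= 'C(#|F|, #|D|)) ->
  #|EW F W| * B <= #|W| * #|SF F|.
Proof.
move=> hW.
have sub : EW F W \subset \bigcup_(D in W) SD F D.
  apply/subsetP=> s; rewrite inE => /andP[hF /existsP[D /andP[DW hD]]].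
  by apply/bigcupP; exists D => //; rewrite inE hF hD.
apply: (leq_trans (leq_mul (leq_trans (subset_leq_card sub) (card_bigcup_leq _ _)) (leqnn B))).
rewrite big_distrl /= -sum_nat_const; apply: leq_sum => D DW.
have [sDF hB] := hW D DW.
exact: leq_trans (leq_mul (leqnn _) hB) (count_SD sDF).
Qed.

Lemma bin_mono_half f m d : 2 * (m + d) <= f -> 'C(f, m) <= 'C(f, m + d).
Proof.
elim: d => [|d IH] h; first by rewrite addn0.
have h1 : 2 * (m + d) <= f by lia.
apply: (leq_trans (IH h1)).
have e := mul_bin_left f (m + d).
rewrite addnS.
have : (m + d).+1 * 'C(f, m + d) <= (m + d).+1 * 'C(f, (m + d).+1).
  rewrite e; apply: leq_mul => //; lia.
by rewrite leq_pmul2l.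
Qed.

Lemma Ea_bound n (F Y : {set 'I_n}) a : a <= #|F| -> ~~ (F \subset Y) ->
  #|EW F [set D : {set 'I_n} | (D \subset F :&: Y) && (#|D| == a)]| * #|F|
    <= (#|F| - a) * #|SF F|.
Proof.
move=> aF nFY.
set Wa := [set D : {set 'I_n} | _]; set f := #|F|.
have hC : 0 < 'C(f, a) by rewrite bin_gt0.
have h1 : #|EW F Wa| * 'C(f, a) <= #|Wa| * #|SF F|.
  apply: EW_L1 => D; rewrite inE => /andP[sD /eqP cD].
  by rewrite cD leqnn; split => //; apply: subset_trans sD (subsetIl _ _).
have h2 : #|Wa| <= 'C(f.-1, a).
  rewrite /Wa cards_draws; apply: leq_bin2l.
  have := cardsID Y F.
  have : 0 < #|F :\: Y|.
    by rewrite lt0n cards_eq0 setD_eq0.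
  rewrite /f; lia.
have h3 := mul_bin_down f a.
rewrite -(leq_pmul2r hC).
apply: (@leq_trans (#|Wa| * #|SF F| * f)).
  by rewrite mulnAC; apply: leq_mul.
apply: (@leq_trans ('C(f.-1, a) * #|SF F| * f)).
  by apply: leq_mul => //; apply: leq_mul.
have -> : 'C(f.-1, a) * #|SF F| * f = (f * 'C(f.-1, a)) * #|SF F| by rewrite mulnC mulnA.
by rewrite h3 mulnAC.
Qed.

Lemma Eb_bound n (F Y : {set 'I_n}) a : 0 < #|F| -> (Y \subset F -> a <= #|Y|) ->
  #|EW F [set D : {set 'I_n} | [&& D \subset F, Y \subset D & #|D| == #|F|.-1]]| * #|F|
    <= (#|F| - a) * #|SF F|.
Proof.
move=> f0 hY.
set Wb := [set D : {set 'I_n} | _]; set f := #|F|.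
have h1 : #|EW F Wb| * f <= #|Wb| * #|SF F|.
  apply: EW_L1 => D; rewrite inE => /and3P[sD _ /eqP cD].
  split => //; rewrite cD -subn1 bin_sub ?bin1 //.
have h2 : #|Wb| <= f - a.
  have [sYF|nYF] := boolP (Y \subset F); last first.
    have -> : Wb = set0.
      apply/setP=> D; rewrite !inE; apply/negP => /and3P[sD sY _].
      by move/negP: nYF; apply; apply: subset_trans sY sD.
    by rewrite cards0.
  have hYa := hY sYF.
  have sub : Wb \subset [set F :\ y | y in F :\: Y].
    apply/subsetP=> D; rewrite inE => /and3P[sD sY /eqP cD].
    have : 0 < #|F :\: D|.
      have := cardsID D F; rewrite (setIidPr sD); rewrite cD /f; lia.
    case/card_gt0P=> y; rewrite inE => /andP[yD yF].
    apply/imsetP; exists y.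
      rewrite inE yF andbT; apply: contra yD; exact: (subsetP sY).
    apply/eqP; rewrite eqEcard; apply/andP; split.
      apply/subsetP=> u uD; rewrite !inE (subsetP sD _ uD) andbT.
      by apply: contraNneq yD => <-.
    by rewrite cD (cardsD1 y F) yF.
  apply: leq_trans (subset_leq_card sub) _.
  apply: leq_trans (leq_imset_card _ _) _.
  have := cardsID Y F; rewrite (setIidPr sYF) /f; lia.
apply: leq_trans h1 _; exact: leq_mul.
Qed.

Lemma core_nat n (F : {set 'I_n}) (W W1 W2 : {set {set 'I_n}}) a m :
  0 < #|F| -> a <= #|F| -> 2 * (#|F| - a) <= #|F| ->
  (forall Y, Y \in W1 -> ~~ (F \subset Y) /\ a <= #|Y|) ->
  (forall X, X \in W -> X \subset F /\
     ((X != F /\ X \in Comp W1 /\ a <= #|X|) \/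
      (X \in W2 /\ m <= #|F| - #|X| /\ a <= #|X|))) ->
  exists X1 X2, #|EW F W| <= X1 + X2 /\
    X1 * #|F| <= #|W1| * ((#|F| - a) + (#|F| - a)) * #|SF F| /\
    X2 * 'C(#|F|, m) <= #|W2| * #|SF F|.
Proof.
move=> f0 aF half hW1 hW.
set f := #|F|.
pose Wa (Y : {set 'I_n}) := [set D : {set 'I_n} | (D \subset F :&: Y) && (#|D| == a)].
pose Wb (Y : {set 'I_n}) := [set D : {set 'I_n} | [&& D \subset F, Y \subset D & #|D| == f.-1]].
pose W2p := [set X : {set 'I_n} | [&& X \in W2, X \subset F, m <= f - #|X| & a <= #|X|]].
exists (\sum_(Y in W1) (#|EW F (Wa Y)| + #|EW F (Wb Y)|)), #|EW F W2p|.
have fn : f <= n by have := max_card F; rewrite card_ord.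
split; [|split].
- have sub : EW F W \subset
      (\bigcup_(Y in W1) (EW F (Wa Y) :|: EW F (Wb Y))) :|: EW F W2p.
    apply/subsetP=> s; rewrite inE => /andP[hFc /existsP[D /andP[DW hDc]]].
    have hF : lev s f = F by apply/eqP; rewrite -in_chainE.
    have hD : lev s #|D| = D by apply/eqP; rewrite -in_chainE.
    have [sDF [[nDF [cD aD]] | [D2 [mD aD]]]] := hW D DW; last first.
      by rewrite inE; apply/orP; right; rewrite inE hFc; apply/existsP; exists D;
         rewrite hDc inE D2 sDF mD aD.
    rewrite inE; apply/orP; left.
    move: cD; rewrite inE => /existsP[Y /andP[YW1 /orP[sDY|sYD]]].
    + apply/bigcupP; exists Y => //; rewrite inE; apply/orP; left.
      rewrite inE hFc; apply/existsP; exists (lev s a).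
      have ca : #|lev s a| = a by rewrite card_lev // (leq_trans aF fn).
      rewrite in_chainE ca eqxx andbT inE ca eqxx andbT.
      have sL : lev s a \subset D by rewrite -hD lev_mono.
      by rewrite subsetI (subset_trans sL sDF) (subset_trans sL sDY).
    + apply/bigcupP; exists Y => //; rewrite inE; apply/orP; right.
      rewrite inE hFc; apply/existsP; exists (lev s f.-1).
      have cf : #|lev s f.-1| = f.-1 by rewrite card_lev // (leq_trans (leq_pred f) fn).
      have Dlt : #|D| < f by apply: proper_card; rewrite properEneq nDF sDF.
      rewrite in_chainE cf eqxx andbT inE cf eqxx andbT.
      have sL : D \subset lev s f.-1.
        by rewrite -hD lev_mono // -ltnS prednK.
      have sLF : lev s f.-1 \subset F.
        by apply: subset_trans (lev_mono s (leq_pred f)) _; rewrite hF.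
      by rewrite sLF (subset_trans sYD sL).
  apply: leq_trans (subset_leq_card sub) _.
  apply: leq_trans (leq_card_setU _ _).1 _; rewrite leq_add2r.
  apply: leq_trans (card_bigcup_leq _ _) _.
  by apply: leq_sum => Y _; exact: (leq_card_setU _ _).1.
- rewrite big_distrl /= -mulnA -sum_nat_const; apply: leq_sum => Y YW1.
  have [nFY aY] := hW1 Y YW1.
  rewrite mulnDl mulnDl; apply: leq_add.
    exact: Ea_bound.
  by apply: Eb_bound.
- apply: leq_trans (EW_L1 _) _.
    move=> D; rewrite inE => /and4P[_ sDF mD aD]; split => //.
    have kf : f - #|D| <= f - a by lia.
    have Df : #|D| <= f by exact: subset_leq_card.
    rewrite -(bin_sub Df).
    rewrite -(subnKC mD); apply: bin_mono_half; rewrite (subnKC mD).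
    lia.
  apply: leq_mul => //; apply: subset_leq_card; apply/subsetP=> X.
  by rewrite inE => /and4P[].
Qed.

Lemma mem_lev n (s : {perm 'I_n}) k u : (u \in lev s k) = ((s^-1)%g u < k).
Proof.
apply/imsetP/idP => [[j jk ->]|h]; first by rewrite permK.
by exists ((s^-1)%g u); rewrite ?permKV.
Qed.

Lemma rv_inj n (s : {perm 'I_n}) : injective (fun j => s (rev_ord j)).
Proof. by move=> x y /perm_inj /rev_ord_inj. Qed.

Definition rv n (s : {perm 'I_n}) : {perm 'I_n} := perm (@rv_inj n s).

Lemma rvK n : involutive (@rv n).
Proof. by move=> s; apply/permP=> j; rewrite !permE rev_ordK. Qed.

Lemma lev_rv n (s : {perm 'I_n}) k : k <= n -> lev (rv s) k = ~: lev s (n - k).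
Proof.
move=> kn; apply/setP=> u; rewrite inE.
apply/imsetP/idP => [[j jk ->]|h].
  have e : rv s j = s (rev_ord j) by rewrite /rv permE.
  rewrite e mem_lev permK /=; move: jk; rewrite inE; clear e; case: j => v vn /=; lia.
exists (rev_ord ((s^-1)%g u)); last by rewrite /rv permE rev_ordK permKV.
by move: h; rewrite mem_lev inE /=; case: ((s^-1)%g u) => v vn /=; lia.
Qed.

Lemma in_chain_rv n (s : {perm 'I_n}) X : in_chain (rv s) X = in_chain s (~: X).
Proof.
have Xn : #|X| <= n by have := max_card X; rewrite card_ord.
have c : #|~: X| = n - #|X| by have := cardsC X; rewrite card_ord; lia.
rewrite !in_chainE lev_rv // c.
by rewrite -(inj_eq (@setC_inj _)) setCK.
Qed.

Lemma card_rv n (P : pred {perm 'I_n}) :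
  #|[set s | P s]| = #|[set s | P (rv s)]|.
Proof.
rewrite -(card_imset _ (can_inj (@rvK n))); apply: eq_card => s.
apply/imsetP/idP => [[t ht ->]|h].
  by rewrite inE rvK; rewrite inE in ht.
by exists (rv s); rewrite ?rvK //; rewrite inE in h; rewrite inE.
Qed.

Lemma cp_compl n (W : {set {set 'I_n}}) F :
  cond_prob_meet W F = cond_prob_meet [set ~: X | X in W] (~: F).
Proof.
rewrite /cond_prob_meet; congr (Rdiv (INR _) (INR _)).
  rewrite (card_rv (fun s => in_chain s (~: F) && [exists D in [set ~: X | X in W], in_chain s D])).
  apply: eq_card => s; rewrite !inE in_chain_rv setCK; congr (_ && _).
  apply/existsP/existsP => [[D /andP[DW hD]]|[D /andP[/imsetP[X XW ->] hD]]].
    by exists (~: D); rewrite imset_f //= in_chain_rv setCK.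
  by exists X; rewrite XW /=; rewrite in_chain_rv setCK in hD.
rewrite (card_rv (fun s => in_chain s (~: F))).
by apply: eq_card => s; rewrite !inE in_chain_rv setCK.
Qed.

Lemma ffact_ge f m : (f - m) ^ m <= f ^_ m.
Proof.
suff H : forall j, j <= m -> (f - m) ^ j <= f ^_ j by exact: H.
elim=> [|j IH] jm; first by [].
rewrite ffactnSr expnSr; apply: leq_mul; first exact: IH (ltnW jm).
lia.
Qed.

Open Scope R_scope.
Lemma INR_addn x y : INR (x + y)%N = INR x + INR y.
Proof. exact: plus_INR. Qed.
Lemma INR_muln x y : INR (x * y)%N = INR x * INR y.
Proof. exact: mult_INR. Qed.
Lemma INR_subn x y : (y <= x)%N -> INR (x - y)%N = INR x - INR y.
Proof. by move/leP=> h; exact: minus_INR. Qed.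
Lemma INR_expn x k : INR (x ^ k)%N = INR x ^ k.
Proof. elim: k => [|k IH]; first by []. by rewrite expnS INR_muln IH. Qed.
Lemma INR_leN x y : (x <= y)%N -> INR x <= INR y.
Proof. by move/leP; exact: le_INR. Qed.
Lemma INR_ltn x y : INR x < INR y -> (x < y)%N.
Proof. by move/INR_lt/ltP. Qed.

Lemma ln_lt_self y : 0 < y -> ln y < y.
Proof.
move=> hy; case: (Rle_or_lt (ln y) 0) => h; first lra.
have := exp_ineq1 (ln y) ltac:(lra); rewrite exp_ln //; lra.
Qed.

Lemma asym (eps : R) : 0 < eps -> exists N : nat, forall n : nat, (N <= n)%N ->
  2 * sqrt (INR n * ln (INR n)) <= eps * INR n.
Proof.
move=> he.
set c := eps * eps / 4.
have hc : 0 < c by rewrite /c; nra.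
have [N0 HN0] := INR_archimed 1 (4 / (c * c)) Rlt_0_1.
exists (N0.+1) => n hn.
have hn1 : 1 <= INR n.
  have := INR_leN (leq_trans (ltn0Sn N0) hn); rewrite /=; lra.
have hnN : INR N0 <= INR n by apply: INR_leN; exact: ltnW.
set x := INR n in hn1 hnN *.
have sx := sqrt_sqrt x ltac:(lra).
have sxp : 0 < sqrt x by apply: sqrt_lt_R0; lra.
have hln : ln x = 2 * ln (sqrt x).
  by rewrite -{1}sx ln_mult //; ring.
have h1 := ln_lt_self sxp.
have hlnx0 : 0 <= ln x.
  case: (Req_dec x 1) => [->|h1x]; first by rewrite ln_1; lra.
  rewrite -ln_1; apply: Rlt_le; apply: ln_increasing; lra.
have hsx : 2 <= c * sqrt x.
  have h4 : 4 / (c * c) < x by lra.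
  have cc : 0 < c * c by nra.
  have h5 : 4 < c * c * x.
    have := Rmult_lt_compat_l (c * c) _ _ cc h4.
    have -> : c * c * (4 / (c * c)) = 4 by field; lra.
    lra.
  rewrite -sx in h5.
  have : 0 <= c * sqrt x by nra.
  nra.
have hlx : ln x <= c * x.
  rewrite -{2}sx. nra.
have key : x * ln x <= (eps * x / 2) * (eps * x / 2).
  have : x * ln x <= x * (c * x) by apply: Rmult_le_compat_l; lra.
  rewrite /c; lra.
have := sqrt_le_1_alt _ _ key.
rewrite sqrt_square; last by nra.
lra.
Qed.

Lemma get_a n (r : R) (f : nat) : INR n / 2 - r < INR f ->
  exists a, (a <= f)%N /\ INR n / 2 - r < INR a /\
    forall k, INR n / 2 - r < INR k -> (a <= k)%N.
Proof.
move=> hf.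
pose P := fun k => if Rlt_dec (INR n / 2 - r) (INR k) then true else false.
have PP : forall k, P k <-> INR n / 2 - r < INR k.
  by move=> k; rewrite /P; case: Rlt_dec.
have ex : exists k, P k by exists f; apply/PP.
case: (ex_minnP ex) => a Pa mina.
exists a; split; first by apply: mina; apply/PP.
split; first by apply/PP.
by move=> k hk; apply: mina; apply/PP.
Qed.

Lemma div_le_helper (x y z w : R) : 0 < y -> 0 < w -> x * w <= z * y -> x / y <= z / w.
Proof.
move=> hy hw h.
have e1 : x = (x / y) * y by field; lra.
have e2 : z = (z / w) * w by field; lra.
set u := x / y in e1 *; set v := z / w in e2 *.
rewrite e1 e2 in h.
have : (u - v) * (y * w) <= 0 by nra.
have : 0 < y * w by nra.
nra.
Qed.

Definition gam (delta : R) (K : nat) := delta / (2 * INR (K`! * 4 ^ K)).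
Definition epsv (delta : R) (p : nat) := Rmin (1/10) (delta / (20 * (INR p + 1))).

Open Scope R_scope.

Lemma final_bound n (F : {set 'I_n}) (W W1 W2 : {set {set 'I_n}}) p K m delta :
  0 < delta -> (0 < m)%N -> (m <= K)%N -> 8 * INR K + 8 <= INR n ->
  2 * sqrt (INR n * ln (INR n)) <= epsv delta p * INR n ->
  inBt F ->
  (forall Y, Y \in W1 -> ~~ (F \subset Y) /\ inBt Y) ->
  (forall X, X \in W -> X \subset F /\
     ((X != F /\ X \in Comp W1 /\ inBt X) \/
      (X \in W2 /\ (m <= #|F| - #|X|)%N /\ inBt X))) ->
  (#|W1| <= p)%N -> INR #|W2| <= gam delta K * INR n ^ m ->
  cond_prob_meet W F <= delta.
Proof.
move=> hd m0 mK hn hr hF hW1 hW hW1c hW2c.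
set r := 2 * sqrt (INR n * ln (INR n)) in hr.
set x := INR n in hn hr hW2c.
have e1 : epsv delta p <= 1/10 by apply: Rmin_l.
have e2 : epsv delta p <= delta / (20 * (INR p + 1)) by apply: Rmin_r.
have hp0 : 0 <= INR p by apply: pos_INR.
have e3 : epsv delta p * (20 * (INR p + 1)) <= delta.
  have h := Rmult_le_compat_r (20 * (INR p + 1)) _ _ ltac:(lra) e2.
  by move: h; have -> : delta / (20 * (INR p + 1)) * (20 * (INR p + 1)) = delta by field; lra.
have hK0 : 0 <= INR K by apply: pos_INR.
have r0 : 0 <= r by rewrite /r; have := sqrt_pos (INR n * ln (INR n)); lra.
set eps := epsv delta p in e1 e2 e3 hr.
have x8 : 8 <= x by lra.
have rx : r <= x / 10 by nra.
have inB : forall X : {set 'I_n}, inBt X -> x / 2 - r < INR #|X| /\ INR #|X| < x / 2 + r.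
  by move=> X; rewrite /inBt => /Rabs_def2 [h1 h2]; rewrite /x /r; split; lra.
have [hF1 hF2] := inB F hF.
have [a [af [ha hamin]]] := get_a hF1.
rewrite -/x in ha hamin.
have aX : forall X : {set 'I_n}, inBt X -> (a <= #|X|)%N.
  by move=> X /inB [h _]; apply: hamin.
have f0 : (0 < #|F|)%N by apply: INR_ltn; rewrite (_ : INR 0 = 0) //; lra.
have hA : INR a <= INR #|F| by apply: INR_leN.
have half : (2 * (#|F| - a) <= #|F|)%N.
  apply: ltnW; apply: INR_ltn.
  rewrite INR_muln INR_subn //; rewrite (_ : INR 2 = 2) //; lra.
have [X1 [X2 [hE [h1 h2]]]] := core_nat (W2 := W2) (m := m) f0 af half
  (fun Y YW => let: conj a1 a2 := hW1 Y YW in conj a1 (aX Y a2))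
  (fun X XW => match hW X XW with
     | conj s (or_introl (conj a1 (conj a2 a3))) => conj s (or_introl (conj a1 (conj a2 (aX X a3))))
     | conj s (or_intror (conj a1 (conj a2 a3))) => conj s (or_intror (conj a1 (conj a2 (aX X a3))))
     end).
change (INR #|EW F W| / INR #|SF F| <= delta).
have hfa : INR (#|F| - a + (#|F| - a))%N = 2 * (INR #|F| - INR a).
  by rewrite INR_addn INR_subn //; ring.
have epos : 0 <= eps by nra.
have hB1 : INR #|W1| * INR (#|F| - a + (#|F| - a))%N <= (delta / 2) * INR #|F|.
  rewrite hfa.
  have w1 : INR #|W1| <= INR p by apply: INR_leN.
  have w0 : 0 <= INR #|W1| by apply: pos_INR.
  have dd : 2 * (INR #|F| - INR a) <= 4 * eps * x by lra.
  have dd0 : 0 <= 2 * (INR #|F| - INR a) by lra.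
  have s1 : INR #|W1| * (2 * (INR #|F| - INR a)) <= INR p * (4 * eps * x).
    apply: Rmult_le_compat => //.
  have s2 : INR p * (4 * eps * x) <= delta * x / 5.
    have : 20 * eps * INR p <= delta by nra.
    nra.
  have s3 : delta * x / 5 <= delta / 2 * INR #|F| by nra.
  lra.
have mK' : INR m <= INR K by apply: INR_leN.
have hfm : x / 4 <= INR #|F| - INR m by lra.
have mf : (m <= #|F|)%N by apply: ltnW; apply: INR_ltn; lra.
have Cpos : (0 < 'C(#|F|, m))%N by rewrite bin_gt0.
have CposR : 0 < INR 'C(#|F|, m) by apply: lt_0_INR; apply/ltP.
have hC : (x / 4) ^ m <= INR 'C(#|F|, m) * INR m`!.
  rewrite -INR_muln bin_ffact.
  apply: Rle_trans (INR_leN (ffact_ge #|F| m)).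
  rewrite INR_expn INR_subn //; apply: pow_incr; lra.
have hB2 : INR #|W2| <= (delta / 2) * INR 'C(#|F|, m).
  have ex : x ^ m = 4 ^ m * (x / 4) ^ m.
    by rewrite -Rpow_mult_distr; congr (_ ^ _); field.
  have g0 : 0 <= gam delta K.
    rewrite /gam /Rdiv; apply: Rmult_le_pos; first lra.
    have : 0 < INR (K`! * 4 ^ K) by apply: lt_0_INR; apply/ltP; rewrite muln_gt0 fact_gt0 expn_gt0.
    move=> h; apply: Rlt_le; apply: Rinv_0_lt_compat; lra.
  have p4 : 0 <= 4 ^ m by apply: pow_le; lra.
  have s1 : INR #|W2| <= gam delta K * 4 ^ m * (INR 'C(#|F|, m) * INR m`!).
    apply: Rle_trans hW2c _; rewrite ex Rmult_assoc.
    apply: Rmult_le_compat_l => //; apply: Rmult_le_compat_l => //.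
  have QK : INR (m`! * 4 ^ m) <= INR (K`! * 4 ^ K).
    apply: INR_leN; apply: leq_mul; first exact: leq_fact.
    exact: leq_pexp2l.
  rewrite INR_muln INR_expn in QK.
  have QK0 : 0 < INR (K`! * 4 ^ K) by apply: lt_0_INR; apply/ltP; rewrite muln_gt0 fact_gt0 expn_gt0.
  have s2 : gam delta K * (INR m`! * INR 4 ^ m) <= delta / 2.
    have : gam delta K * INR (K`! * 4 ^ K) = delta / 2 by rewrite /gam; field; lra.
    have : gam delta K * (INR m`! * INR 4 ^ m) <= gam delta K * INR (K`! * 4 ^ K).
      by apply: Rmult_le_compat_l.
    lra.
  rewrite (_ : INR 4 = 4) in s2; last by simpl; ring.
  have : gam delta K * 4 ^ m * (INR 'C(#|F|, m) * INR m`!) =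
         (gam delta K * (INR m`! * 4 ^ m)) * INR 'C(#|F|, m) by ring.
  have c0 : 0 <= INR 'C(#|F|, m) by lra.
  nra.
have fR : 0 < INR #|F| by apply: lt_0_INR; apply/ltP.
case: (posnP #|SF F|) => [S0|Spos].
  rewrite S0 muln0 in h1; rewrite S0 muln0 in h2.
  have X10 : X1 = 0%N by move: h1; rewrite leqn0 muln_eq0 => /orP[/eqP//|/eqP e]; rewrite e in f0.
  have X20 : X2 = 0%N by move: h2; rewrite leqn0 muln_eq0 => /orP[/eqP//|/eqP e]; rewrite e in Cpos.
  rewrite X10 X20 leqn0 in hE; rewrite (eqP hE) S0 /= /Rdiv Rmult_0_l; lra.
have SR : 0 < INR #|SF F| by apply: lt_0_INR; apply/ltP.
have q1 : INR X1 / INR #|SF F| <= delta / 2.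
  apply: Rle_trans (_ : _ <= (INR #|W1| * INR (#|F| - a + (#|F| - a))%N) / INR #|F|) _.
    apply: div_le_helper => //.
    by rewrite -!INR_muln; apply: INR_leN.
  have := div_le_helper (y := INR #|F|) (w := 1) (x := INR #|W1| * INR (#|F| - a + (#|F| - a))%N) (z := delta / 2) fR Rlt_0_1 ltac:(lra).
  by rewrite Rdiv_1_r.
have q2 : INR X2 / INR #|SF F| <= delta / 2.
  apply: Rle_trans (_ : _ <= INR #|W2| / INR 'C(#|F|, m)) _.
    apply: div_le_helper => //.
    by rewrite -!INR_muln; apply: INR_leN.
  have := div_le_helper (y := INR 'C(#|F|, m)) (w := 1) (x := INR #|W2|) (z := delta / 2) CposR Rlt_0_1 ltac:(lra).
  by rewrite Rdiv_1_r.
have hE' : INR #|EW F W| <= INR X1 + INR X2 by rewrite -INR_addn; apply: INR_leN.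
have : INR #|EW F W| / INR #|SF F| <= INR X1 / INR #|SF F| + INR X2 / INR #|SF F|.
  rewrite /Rdiv -Rmult_plus_distr_r; apply: Rmult_le_compat_r => //.
  by apply: Rlt_le; apply: Rinv_0_lt_compat.
lra.
Qed.

Open Scope nat_scope.

Definition inBtb n (X : {set 'I_n}) : bool :=
  if Rlt_dec (Rabs (INR #|X| - INR n / 2)) (2 * sqrt (INR n * ln (INR n))) then true else false.

Lemma inBtbP n (X : {set 'I_n}) : inBtb X <-> inBt X.
Proof. by rewrite /inBtb /inBt; case: Rlt_dec. Qed.

Lemma card_setC n (X : {set 'I_n}) : #|~: X| = n - #|X|.
Proof. by have := cardsC X; rewrite card_ord; lia. Qed.

Section RS.
Local Open Scope R_scope.
Lemma inBt_compl n (X : {set 'I_n}) : inBt X -> inBt (~: X).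
Proof.
rewrite /inBt card_setC INR_subn; last by have := max_card X; rewrite card_ord.
move=> h.
have -> : INR n - INR #|X| - INR n / 2 = - (INR #|X| - INR n / 2) by lra.
by rewrite Rabs_Ropp.
Qed.
End RS.

Lemma sub_chain n q (c : mchain n q) (j k : 'I_q) :
  is_marked_chain c -> j <= k -> c.2 k \subset c.2 j.
Proof.
move=> [hc _] jk; case: (eqVneq j k) => [->|ne]; first exact: subxx.
by apply: proper_sub; apply: hc; rewrite ltn_neqAle jk andbT; apply: contra ne => /eqP /val_inj ->.
Qed.

Lemma gap_chain n q l (M : {set mchain n q}) c (j k : 'I_q) :
  c \in M -> marked_family_Bt M -> gapped_mfamily l M -> j <= k ->
  l * (k - j) <= #|c.2 j| - #|c.2 k|.
Proof.
move=> cM hM hg jk.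
have hmc := (hM c cM).1.
have hc := hmc.1.
have mem : forall t : 'I_q, c.2 t \in members M.
  by move=> t; rewrite inE; apply/existsP; exists c; rewrite cM /=; apply/existsP; exists t.
suff H : forall t (k : 'I_q), j + t = k -> l * t <= #|c.2 j| - #|c.2 k|.
  by apply: H; lia.
elim=> [|t IH] k' e.
  by rewrite muln0.
have lt : j + t < q by have := ltn_ord k'; lia.
pose k0 := Ordinal lt.
have := IH k0 erefl.
have sk : c.2 k' \proper c.2 k0 by apply: (hc k0 k') => /=; lia.
have g := hg _ _ (mem k') (mem k0) sk.
have cd : #|c.2 k0 :\: c.2 k'| = #|c.2 k0| - #|c.2 k'|.
  have := cardsID (c.2 k') (c.2 k0); rewrite (setIidPr (proper_sub sk)); lia.
have s1 : #|c.2 k'| <= #|c.2 k0| by apply: subset_leq_card; exact: proper_sub.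
have s2 : #|c.2 k0| <= #|c.2 j| by apply: subset_leq_card; apply: sub_chain hmc _ => /=; lia.
lia.
Qed.

Theorem lemma4p17 (d : Order.disp_t) (P : finPOrderType d) :
  tree_poset (P := P) ->
  forall (delta : R) (l q : nat), Rlt 0 delta -> 0 < l -> 0 < q ->
  exists gamma : R, Rlt 0 gamma /\
  exists N : nat, forall n : nat, N <= n ->
  forall (i s : 'I_q), i != s ->
  forall (M : {set mchain n q}) (F : {set 'I_n}),
    marked_family_Bt M -> gapped_mfamily l M -> F \in Lset M i ->
    bad_iss #|P| l M F i s gamma ->
    (i < s -> lower_bad M F i delta) /\ (s < i -> upper_bad M F i delta).
Proof.
move=> _ delta l q hd l0 q0.
set p := #|P|; set K := l * q.
have QK0 : Rlt 0 (INR (K`! * 4 ^ K)).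
  by apply: lt_0_INR; apply/ltP; rewrite muln_gt0 fact_gt0 expn_gt0.
have g0 : Rlt 0 (gam delta K).
  rewrite /gam /Rdiv; apply: Rmult_lt_0_compat => //.
  apply: Rinv_0_lt_compat; lra.
have e0 : Rlt 0 (epsv delta p).
  rewrite /epsv; apply: Rmin_glb_lt; first lra.
  rewrite /Rdiv; apply: Rmult_lt_0_compat => //; apply: Rinv_0_lt_compat.
  have := pos_INR p; lra.
exists (gam delta K); split => //.
have [N1 HN1] := asym e0.
exists (maxn N1 (8 * K + 8)) => n hn i s ins M F hM hg hL hbad.
have hr := HN1 n (leq_trans (leq_maxl _ _) hn).
have hnK : Rle (8 * INR K + 8) (INR n).
  have := INR_leN (leq_trans (leq_maxr _ _) hn).
  rewrite INR_addn INR_muln; simpl; lra.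
rewrite inE in hL; case/existsP: hL => c /andP[cM /eqP cF].
have hFB : inBt F by rewrite -cF; exact: ((hM c cM).2 i).
have Mne : Msub M F i != set0 by apply/set0Pn; exists c; rewrite inE cM cF eqxx.
case: hbad => _ hb.
split => [is_lt|is_gt].
- rewrite is_lt in hb.
  case: hb => W1 [W2 [hW1b [hW2b [hW1U [hW1c [hW2c hcov]]]]]].
  pose W := [set X : {set 'I_n} | (X \subset F) && [exists c in Msub M F i,
     [exists j : 'I_q, (c.2 j == X) &&
        (((X != F) && (X \in Comp W1) && inBtb X) || ((j == s) && (X \in W2)))]]].
  split => //; exists W; split; [|split].
  + by move=> D; rewrite inE => /andP[].
  + move=> c1 c1M; have c1M' := c1M; rewrite inE in c1M'; case/andP: c1M' => c1inM /eqP c1F.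
    case: (hcov c1 c1M) => [[j [hD [hne [hC hB]]]]|hs].
    * have hB' : inBtb (c1.2 j) by apply/inBtbP.
      exists j; rewrite inE; rewrite inE in hD; rewrite hD /=.
      apply/existsP; exists c1; rewrite c1M /=; apply/existsP; exists j.
      by rewrite eqxx hne hC hB'.
    * have sF : c1.2 s \subset F.
        by rewrite -c1F; apply: sub_chain (hM c1 c1inM).1 _; exact: ltnW.
      exists s; rewrite inE sF /=.
      apply/existsP; exists c1; rewrite c1M /=; apply/existsP; exists s.
      by rewrite !eqxx hs orbT.
  + apply: (final_bound (p := p) (K := K) (m := l * (s - i)) (W1 := W1) (W2 := W2)) => //.
    * by rewrite muln_gt0 l0 subn_gt0.
    * apply: leq_mul => //; apply: leq_trans (leq_subr _ _) (ltnW (ltn_ord s)).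
    * move=> Y YW1; split; last exact: (hW1b Y YW1).
      by have := hW1U Y YW1; rewrite /Uset inE.
    * move=> X; rewrite inE => /andP[sXF /existsP[c1 /andP[c1M /existsP[j /andP[/eqP cj hor]]]]].
      split => //.
      case/orP: hor => [/andP[/andP[ne cmp] b]|/andP[/eqP js X2]].
        by left; split => //; split => //; apply/inBtbP.
      right; split => //; split; last exact: hW2b.
      rewrite inE in c1M; case/andP: c1M => c1inM /eqP c1F.
      rewrite -cj js -c1F; apply: gap_chain c1inM hM hg _; exact: ltnW.
- have nis : (i < s) = false by rewrite ltnNge (ltnW is_gt).
  rewrite nis in hb.
  case: hb => W1 [W2 [hW1b [hW2b [hW1D [hW1c [hW2c hcov]]]]]].
  pose W := [set X : {set 'I_n} | (F \subset X) && [exists c in Msub M F i,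
     [exists j : 'I_q, (c.2 j == X) &&
        (((X != F) && (X \in Comp W1) && inBtb X) || ((j == s) && (X \in W2)))]]].
  split => //; exists W; split; [|split].
  + by move=> D; rewrite inE => /andP[].
  + move=> c1 c1M; have c1M' := c1M; rewrite inE in c1M'; case/andP: c1M' => c1inM /eqP c1F.
    case: (hcov c1 c1M) => [[j [hD [hne [hC hB]]]]|hs].
    * have hB' : inBtb (c1.2 j) by apply/inBtbP.
      exists j; rewrite inE; rewrite inE in hD; rewrite hD /=.
      apply/existsP; exists c1; rewrite c1M /=; apply/existsP; exists j.
      by rewrite eqxx hne hC hB'.
    * have sF : F \subset c1.2 s.
        by rewrite -c1F; apply: sub_chain (hM c1 c1inM).1 _; exact: ltnW.
      exists s; rewrite inE sF /=.
      apply/existsP; exists c1; rewrite c1M /=; apply/existsP; exists s.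
      by rewrite !eqxx hs orbT.
  + rewrite cp_compl.
    apply: (final_bound (p := p) (K := K) (m := l * (i - s))
              (W1 := [set ~: Y | Y in W1]) (W2 := [set ~: X | X in W2])) => //.
    * by rewrite muln_gt0 l0 subn_gt0.
    * apply: leq_mul => //; apply: leq_trans (leq_subr _ _) (ltnW (ltn_ord i)).
    * exact: inBt_compl.
    * move=> _ /imsetP[Y YW1 ->]; split; last exact: inBt_compl (hW1b Y YW1).
      by rewrite setCS; have := hW1D Y YW1; rewrite /Dset inE.
    * move=> _ /imsetP[X XW ->]; move: XW.
      rewrite inE => /andP[sFX /existsP[c1 /andP[c1M /existsP[j /andP[/eqP cj hor]]]]].
      split; first by rewrite setCS.
      case/orP: hor => [/andP[/andP[ne cmp] b]|/andP[/eqP js X2]].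
        left; split; first by rewrite (inj_eq (@setC_inj _)).
        split; last by apply: inBt_compl; apply/inBtbP.
        move: cmp; rewrite !inE => /existsP[Y /andP[YW1 hY]].
        by apply/existsP; exists (~: Y); rewrite imset_f //= !setCS orbC.
      right; split; first exact: imset_f.
      split; last exact: inBt_compl (hW2b X X2).
      rewrite inE in c1M; case/andP: c1M => c1inM /eqP c1F.
      have gp := gap_chain c1inM hM hg (ltnW is_gt).
      subst j; rewrite cj c1F in gp.
      have Xn : #|X| <= n by have := max_card X; rewrite card_ord.
      rewrite !card_setC; lia.
    * exact: leq_trans (leq_imset_card _ _) hW1c.
    * exact: Rle_trans (INR_leN (leq_imset_card _ _)) hW2c.
Qed.
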